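(* Let $s\ge1$ and $0\le k\le s$. Then $E(s,k)=\sum_{m=k}^{s}(-1)^{m+k}\binom{m}{k}O(s,m)$.
   Context: A $p$-string of length $s$ is a correctly matched string of $s$ pairs of parentheses; there are $C_s=\frac{1}{s+1}\binom{2s}{s}$ of them ($C_0=1$). Given $p$-strings $U$ (upper), $W$ (lower) of length $s$, the meander graph $\Gamma^1_{2s-1}$ is obtained by marking points $0,1,\dots,2s$ on the $x$-axis, taking the segment $[0,2s]$, joining points $a,b$ by an upper semicircle for each matched pair of $U$ at positions $a<b$ (positions $1,\dots,2s$), and points $a-1,b-1$ by a lower semicircle for each matched pair of $W$ at positions $a<b$; the vertices are $1,\dots,2s-1$. A pierced circle at position $i$ ($1\le i\le 2s-2$) is present if vertices $i,i+1$ are joined both by an upper and a lower semicircle. $E(s,k)$ is the number of pairs $(U,W)$ whose meander graph has exactly $k$ pierced circles. $O(s,k)=\binom{2s-k-1}{k}(C_{s-k})^2$, which equals the number of triples $(A,P,Q)$ where $A$ is a placement of $k$ pairwise vertex-disjoint pierced circles on the path graph with $2s-1$ vertices and $P,Q$ are $p$-strings of length $s-k$. *)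

(* Defs.v *)
From mathcomp Require Import all_boot all_order all_algebra.
Set Implicit Arguments. Unset Strict Implicit. Unset Printing Implicit Defensive.

(* A parenthesis string is a seq bool: true = '(' , false = ')'. *)

Fixpoint bal_aux (h : nat) (w : seq bool) : bool :=
  match w with
  | [::] => h == 0
  | true :: w' => bal_aux h.+1 w'
  | false :: w' => (0 < h) && bal_aux h.-1 w'
  end.

Definition balanced (w : seq bool) : bool := bal_aux 0 w.

Definition pstring (s : nat) (w : seq bool) : bool :=
  (size w == 2 * s) && balanced w.

Definition catalan (n : nat) : nat := 'C(2 * n, n) %/ n.+1.

(* Positions are 1-indexed (1..2s). (a,b) is a matched pair of w iff
   a < b, position a is '(', position b is ')', and the substring strictly
   between them is correctly matched. *)
Definition matched (w : seq bool) (a b : nat) : bool :=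
  [&& 0 < a, a < b, b <= size w,
      nth false w a.-1 == true, nth false w b.-1 == false
    & balanced (take (b - a).-1 (drop a w))].

(* Upper semicircle joins points a,b for each matched pair (a,b) of U;
   lower semicircle joins points a-1,b-1 for each matched pair (a,b) of W. *)
Definition upper_joined (U : seq bool) (x y : nat) : bool := matched U x y.
Definition lower_joined (W : seq bool) (x y : nat) : bool := matched W x.+1 y.+1.

(* pierced circle at i (1 <= i <= 2s-2): vertices i, i+1 joined by both an
   upper and a lower semicircle. *)
Definition pierced (U W : seq bool) (i : nat) : bool :=
  upper_joined U i i.+1 && lower_joined W i i.+1.

Definition num_pierced (s : nat) (U W : seq bool) : nat :=
  count (pierced U W) (iota 1 (2 * s - 2)).

Definition E (s k : nat) : nat :=
  #|[set UW : (2 * s).-tuple bool * (2 * s).-tuple bool |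
      [&& pstring s UW.1, pstring s UW.2
        & num_pierced s UW.1 UW.2 == k]]|.

Definition O (s k : nat) : nat := 'C(2 * s - k - 1, k) * (catalan (s - k)) ^ 2.

(* Main.v *)
Require Import Defs.
From mathcomp Require Import all_boot all_order all_algebra.
From mathcomp Require Import zify.
Import GRing.Theory.
Set Implicit Arguments. Unset Strict Implicit.

Section Aux.
Local Open Scope nat_scope.


Fixpoint allw (n : nat) : seq (seq bool) :=
  if n is n'.+1 then map (cons true) (allw n') ++ map (cons false) (allw n')
  else [:: [::]].

Lemma count_allwS (P : pred (seq bool)) n :
  count P (allw n.+1) = count (fun x => P (true :: x)) (allw n) + count (fun x => P (false :: x)) (allw n).
Proof. by rewrite /= count_cat !count_map. Qed.

Lemma count_false T (s : seq T) : count (fun _ => false) s = 0.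
Proof. by elim: s. Qed.

Lemma consb_inj (b : bool) : injective (cons b).
Proof. by move=> x y []. Qed.

Lemma mem_allw n x : (x \in allw n) = (size x == n).
Proof.
elim: n x => [|n IH] x.
  by case: x.
rewrite /= mem_cat; case: x => [|b x] /=.
  by apply/orP; case=> /mapP [].
rewrite eqSS -IH; case: b.
- rewrite (mem_map (@consb_inj true)).
  by apply/orP/idP => [[//|/mapP [] //]|->]; left.
- rewrite (mem_map (@consb_inj false)).
  by apply/orP/idP => [[/mapP [] //|//]|->]; right.
Qed.

Lemma uniq_allw n : uniq (allw n).
Proof.
elim: n => [|n IH] //=.
rewrite cat_uniq !map_inj_uniq // ?IH ?andbT.
- apply/hasPn => x /mapP [y _ ->]; apply/mapP => [[z _]] //.
- by move=> a b [].
- by move=> a b [].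
Qed.

Definition g (L h : nat) : nat := count (bal_aux h) (allw L).

Lemma g0 h : g 0 h = (h == 0).
Proof. by rewrite /g /=; case: h. Qed.

Lemma gS L h : g L.+1 h = g L h.+1 + (if h is h'.+1 then g L h' else 0).
Proof.
rewrite /g count_allwS /=; congr (_ + _); case: h => [|h] /=.
  by rewrite count_false.
by [].
Qed.

Lemma g_small L h : L < h -> g L h = 0.
Proof.
elim: L h => [|L IH] h H; first by rewrite g0; case: h H.
rewrite gS IH; last lia.
case: h H => [//|h] H; rewrite IH //; lia.
Qed.

Lemma g_diag h : g h h = 1.
Proof.
elim: h => [|h IH]; first by rewrite g0.
by rewrite gS g_small // IH.
Qed.

Definition cm (n j : nat) := if j is j'.+1 then 'C(n, j') else 0.

Lemma binS' N j : 'C(N.+1, j) = cm N j + 'C(N, j).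
Proof. case: j => [|j] /=; first by rewrite !bin0. by rewrite binS addnC. Qed.

Lemma g_closed j h : g (2 * j + h) h + cm (2 * j + h) j = 'C(2 * j + h, j).
Proof.
elim: j h => [|j IHj] h.
  by rewrite muln0 add0n g_diag bin0.
elim: h => [|h IHh].
  have e : 2 * j.+1 + 0 = (2 * j + 1).+1 by lia.
  rewrite e gS /= addn0 binS' binS.
  have := IHj 1.
  have -> : 'C((2 * j + 1), j.+1) = 'C(2 * j + 1, j).
    by rewrite -(bin_sub (n:=2*j+1) (m:=j)) //; [congr 'C(_,_); lia| lia].
  lia.
have e : 2 * j.+1 + h.+1 = (2 * j + h.+2).+1 by lia.
rewrite e gS /= binS' binS.
have e2 : 2 * j + h.+2 = 2 * j.+1 + h by lia.
have := IHj h.+2; rewrite e2 /= => H1.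
move: IHh; rewrite /= => H2.
lia.
Qed.

Lemma D_catalan n : g (2 * n) 0 = catalan n.
Proof.
have H := g_closed n 0; rewrite addn0 in H.
have Hc : cm (2 * n) n * n.+1 = 'C(2 * n, n) * n.
  case: n {H} => [|n] //=.
  have h := mul_bin_left (2 * n.+1) n.
  have e : 2 * n.+1 - n = n.+2 by lia.
  rewrite e in h; lia.
have E1 : 'C(2 * n, n) = g (2 * n) 0 * n.+1 by nia.
by rewrite /catalan E1 mulnK.
Qed.


Fixpoint mk (a u : seq bool) : bool :=
  if a is x :: a' then (x ==> (nth false u 0 && ~~ nth false u 1)) && mk a' (behead u) else true.
Fixpoint nonadj (a : seq bool) : bool :=
  if a is x :: a' then (x ==> ~~ head false a') && nonadj a' else true.

Lemma nonadj_count a : nonadj a -> 2 * count id a <= (size a).+1.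
Proof.
move: {2}(size a) (leqnn (size a)) => n; elim: n a => [|n IH] a Ha.
  by case: a Ha.
case: a Ha => [|[] a] Ha Hn //=.
- case: a Ha Hn => [|[] a] Ha Hn //=.
  move: Hn => /= Hn.
  have H := IH a; have {}H := H (ltnW Ha) Hn. lia.
- move: Hn => /= Hn. have := IH a Ha Hn; lia.
Qed.

Lemma mk_adj a u : ~~ nonadj a -> mk a u = false.
Proof.
elim: a u => [|x a IH] u //=.
rewrite negb_and => /orP [|/IH ->]; last by rewrite andbF.
case: x => //=; case: a {IH} => [|[] a] //= _.
rewrite nth_behead; by case: (nth false u 1); rewrite /= ?andbF.
Qed.

Lemma mk_count a : nonadj a -> forall L h, size a < L ->
  count (fun u => mk a u && bal_aux h u) (allw L) = g (L - 2 * count id a) h.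
Proof.
move: {2}(size a) (leqnn (size a)) => n; elim: n a => [|n IH] a Ha.
  case: a Ha => // _ _ L h _ /=; rewrite subn0 /g; apply: eq_count => u //.
case: a Ha => [|x a] Ha Hn L h HL.
  rewrite /= subn0 /g; apply: eq_count => u //.
case: L HL => [//|L] HL.
have {}HL : (size a).+1 < L.+1 := HL.
have {}Ha : size a < n.+1 := Ha.
case: x Hn => /andP [Hh Hn].
- case: L HL => [|L] HL; first by case: a Ha HL Hh Hn.
  rewrite !count_allwS /= !count_false add0n addn0 !addn0.
  case: a Ha HL Hh Hn => [|y a] Ha HL Hh Hn.
    rewrite /g; have -> : L.+2 - 2 = L by lia. by apply: eq_count.
  case: y Ha HL Hh Hn => //= Ha HL _ Hn.
  have := IH a; rewrite /= => H.
  rewrite H; [congr g; lia|lia|exact Hn|lia].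
- have Hs : size a <= n by lia.
  have HL' : size a < L by lia.
  rewrite count_allwS /= (IH a Hs Hn L h.+1 HL').
  have -> : L.+1 - 2 * (0 + count id a) = (L - 2 * count id a).+1.
    have := nonadj_count Hn; lia.
  rewrite gS; congr (_ + _).
  case: h => [|h] /=.
    by rewrite -(count_false (allw L)); apply: eq_count => x; rewrite andbF.
  by rewrite (IH a Hs Hn L h HL').
Qed.

Definition NA n m := count (fun a => nonadj a && (count id a == m)) (allw n).

Lemma NA_closed n m : NA n m = 'C(n.+1 - m, m).
Proof.
move: {2}n (leqnn n) => N; elim: N n m => [|N IH] n m Hn.
  case: n Hn => // _; case: m => //.
case: n Hn => [|n] Hn; first by case: m.
case: n Hn => [|n] Hn; first by case: m => [|[|m]].
rewrite /NA count_allwS count_allwS /= !count_false add0n.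
have -> : count (fun x => nonadj x && (count id x == m)) (allw n.+1) = NA n.+1 m by [].
rewrite IH; last lia.
case: m => [|m].
  have -> : count (fun x => nonadj x && ((1 + (0 + count id x))%N == 0)) (allw n) = 0.
    rewrite -(count_false (allw n)); apply: eq_count => x.
    by case: (nonadj x) => //=; apply/negbTE/eqP; lia.
  by rewrite !bin0.
have -> : count (fun x => nonadj x && ((1 + (0 + count id x))%N == m.+1)) (allw n)
   = NA n m.
  apply: eq_count => x; case: (nonadj x) => //=.
rewrite IH; last lia.
case: (leqP m n.+1) => Hm.
  have -> : n.+3 - m.+1 = (n.+1 - m).+1 by lia.
  have -> : n.+2 - m.+1 = n.+1 - m by lia.
  by rewrite binS addnC.
have -> : n.+3 - m.+1 = 0 by lia.
have -> : n.+2 - m.+1 = 0 by lia.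
have -> : n.+1 - m = 0 by lia.
by rewrite !bin0n; case: m Hm.
Qed.


Definition subb (a b : seq bool) :=
  all (fun j => nth false a j ==> nth false b j) (iota 0 (size a)).

Lemma all_iotaS (P : nat -> bool) n : all P (iota 0 n.+1) = P 0 && all (fun j => P j.+1) (iota 0 n).
Proof.
by rewrite /= -(addn0 1) iotaDl all_map; congr (_ && _); apply: eq_all => j /=.
Qed.

Lemma subb_cons x a y b : subb (x :: a) (y :: b) = (x ==> y) && subb a b.
Proof. by rewrite /subb [size _]/= all_iotaS. Qed.

Lemma subb_nil b : subb [::] b.
Proof. by []. Qed.

Lemma binc b m : 'C(count id b, m) = count (fun a => (count id a == m) && subb a b) (allw (size b)).
Proof.
elim: b m => [|y b IH] m.
  by case: m.
rewrite /= count_allwS.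
have E1 : count (fun x => (count id (false :: x) == m) && subb (false :: x) (y :: b)) (allw (size b))
   = 'C(count id b, m).
  by rewrite IH; apply: eq_count => x; rewrite subb_cons /= add0n.
rewrite E1; case: y {E1} => /=.
- case: m => [|m].
    rewrite [count _ (allw _)](@eq_count _ _ (fun _ => false)) ?count_false ?bin0 // => x.
  rewrite add1n binS addnC IH; congr (_ + _); apply: eq_count => x.
  by rewrite subb_cons /= add1n eqSS.
- rewrite [count _ (allw _)](@eq_count _ _ (fun _ => false)) ?count_false // => x.
  by rewrite subb_cons /=; case: (_ == _).
Qed.

Lemma mk_pos a u : mk a u = all (fun j => nth false a j ==> (nth false u j && ~~ nth false u j.+1)) (iota 0 (size a)).
Proof.
elim: a u => [|x a IH] u; first by [].
rewrite [size _]/= all_iotaS /= IH; congr (_ && _); apply: eq_all => j /=.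
by rewrite !nth_behead.
Qed.

Lemma pierced_eq u w i : 0 < i -> i.+1 <= size u -> i.+2 <= size w ->
  pierced u w i = (nth false u i.-1 && ~~ nth false u i) && (nth false w i && ~~ nth false w i.+1).
Proof.
move=> H0 H1 H2.
rewrite /pierced /upper_joined /lower_joined /matched H0 ltnSn H1 ltnSn H2 /=.
rewrite subSn // subnn /= take0 /balanced /=.
rewrite subSS subSn // subnn /= take0 /=.
by rewrite !eqb_id !eqbF_neg !andbT.
Qed.

Lemma link s u w a : size u = 2 * s -> size w = 2 * s -> size a = 2 * s - 2 ->
  subb a (map (pierced u w) (iota 1 (2 * s - 2))) = mk a u && mk (false :: a) w.
Proof.
move=> Hu Hw Ha.
rewrite /subb /= !mk_pos -all_predI; apply: eq_in_all => j; rewrite mem_iota add0n => /andP [_ Hj].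
rewrite Ha in Hj.
rewrite /= (nth_map 0); last by rewrite size_iota.
rewrite nth_iota // pierced_eq ?add1n //; try lia.
rewrite /= !nth_behead.
by case: (nth false a j).
Qed.


Lemma sum_tuple L (F : seq bool -> nat) :
  \sum_(t : L.-tuple bool) F t = \sum_(x <- allw L) F x.
Proof.
rewrite -(big_map (@tval L bool) xpredT F).
apply: perm_big; apply: uniq_perm.
- by rewrite map_inj_uniq ?index_enum_uniq //; apply: val_inj.
- exact: uniq_allw.
- move=> x; rewrite mem_allw; apply/mapP/idP.
    by move=> [t _ ->]; rewrite size_tuple.
  move=> /eqP H; exists (Tuple (introT eqP H)) => //; exact: mem_index_enum.
Qed.

Definition NP s (u w : seq bool) := num_pierced s u w.

Lemma E_sum s k : E s k =
  \sum_(u <- allw (2 * s)) \sum_(w <- allw (2 * s)) ((balanced u && balanced w) && (num_pierced s u w == k) : nat).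
Proof.
rewrite -sum_tuple.
rewrite (eq_bigr (fun u : (2 * s).-tuple bool => \sum_(w : (2 * s).-tuple bool) ((balanced u && balanced w) && (num_pierced s u w == k) : nat))); last first.
  by move=> u _; rewrite -sum_tuple.
rewrite pair_big /= /E -sum1_card big_mkcond /=; apply: eq_bigr => p _.
rewrite in_set /pstring !size_tuple eqxx /= andbA.
by case: (_ && _ && _).
Qed.

Lemma count_sum T (P : pred T) r : count P r = \sum_(x <- r) (P x : nat).
Proof. by elim: r => [|x r IH]; rewrite ?big_nil ?big_cons //= IH. Qed.

Lemma side_count a L : size a < L ->
  \sum_(u <- allw L) ((mk a u && balanced u) : nat) = nonadj a * g (L - 2 * count id a) 0.
Proof.
move=> HL; rewrite -count_sum.
case: (boolP (nonadj a)) => Hn.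
  by rewrite mul1n mk_count.
rewrite mul0n (@eq_count _ _ (fun _ => false)) ?count_false // => u.
by rewrite mk_adj.
Qed.

Lemma key s m : 1 <= s ->
  \sum_(u <- allw (2 * s)) \sum_(w <- allw (2 * s))
     ((balanced u && balanced w) * 'C(num_pierced s u w, m)) = O s m.
Proof.
move=> Hs.
set n := 2 * s - 2.
have step1 : forall u w, u \in allw (2 * s) -> w \in allw (2 * s) ->
   (balanced u && balanced w) * 'C(num_pierced s u w, m) =
   \sum_(a <- allw n) ((count id a == m) * ((mk a u && balanced u) * (mk (false :: a) w && balanced w))).
  move=> u w; rewrite !mem_allw => /eqP Hu /eqP Hw.
  rewrite /num_pierced -(count_map _ id) binc size_map size_iota count_sum big_distrr.
  apply: eq_big_seq => a; rewrite mem_allw => /eqP Ha.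
  rewrite (link Hu Hw Ha).
  by case: (balanced u); case: (balanced w); case: (_ == m); case: (mk a u); case: (mk _ w).
rewrite (eq_big_seq (fun u => \sum_(w <- allw (2 * s)) \sum_(a <- allw n) ((count id a == m) * ((mk a u && balanced u) * (mk (false :: a) w && balanced w))))); last first.
  by move=> u Hu; apply: eq_big_seq => w Hw; rewrite step1.
rewrite (eq_bigr (fun u => \sum_(a <- allw n) \sum_(w <- allw (2 * s)) ((count id a == m) * ((mk a u && balanced u) * (mk (false :: a) w && balanced w))))); last first.
  by move=> u _; rewrite exchange_big.
rewrite exchange_big /=.
rewrite (eq_big_seq (fun a => (nonadj a && (count id a == m)) * (catalan (s - m)) ^ 2)); last first.
  move=> a; rewrite mem_allw => /eqP Ha.
  transitivity ((count id a == m) * ((\sum_(u <- allw (2 * s)) ((mk a u && balanced u) : nat)) *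
     (\sum_(w <- allw (2 * s)) ((mk (false :: a) w && balanced w) : nat)))).
    rewrite big_distrl big_distrr /=; apply: eq_bigr => u _.
    by rewrite big_distrr big_distrr /=.
  rewrite /n in Ha; rewrite side_count; [|by rewrite Ha; lia].
  rewrite side_count /=; [|by rewrite Ha; lia].
  rewrite add0n.
  case: (boolP (count id a == m)) => /eqP Hc; last by rewrite andbF.
  rewrite Hc andbT mul1n.
  have -> : 2 * s - 2 * m = 2 * (s - m) by lia.
  rewrite D_catalan.
  by case: (nonadj a); rewrite /= ?mul1n ?mul0n ?muln0.
rewrite -big_distrl /= -count_sum.
rewrite -/(NA n m) NA_closed /O.
congr (_ * _); congr 'C(_, _); rewrite /n; lia.
Qed.

End Aux.

Local Open Scope ring_scope.


Definition Sg (j k : nat) : int :=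
  \sum_(0 <= m < j.+1) (-1) ^+ (m + k) * ('C(m, k))%:Z * ('C(j, m))%:Z.

Lemma sgnS (m k : nat) : (-1) ^+ (m.+1 + k) = - (-1) ^+ (m + k) :> int.
Proof. by rewrite addSn exprS mulN1r. Qed.

Lemma inv_id j k : Sg j k = (j == k)%:Z.
Proof.
elim: j k => [|j IH] k.
  rewrite /Sg big_nat1 /= bin0 mulr1.
  by case: k => [|k] //=; rewrite mulr0.
rewrite /Sg big_nat_recl //.
have HA : \sum_(0 <= m < j.+1) (-1) ^+ (m.+1 + k) * ('C(m.+1, k))%:Z * ('C(j.+1, m.+1))%:Z
  = \sum_(0 <= m < j.+1) (-1) ^+ (m.+1 + k) * ('C(m.+1, k))%:Z * ('C(j, m.+1))%:Z
  + \sum_(0 <= m < j.+1) (-1) ^+ (m.+1 + k) * ('C(m.+1, k))%:Z * ('C(j, m))%:Z.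
  rewrite -big_split /=; apply: eq_bigr => m _.
  by rewrite binS PoszD mulrDr.
rewrite HA addrA.
have H1 : (-1) ^+ (0 + k) * ('C(0, k))%:Z * ('C(j.+1, 0))%:Z +
  \sum_(0 <= m < j.+1) (-1) ^+ (m.+1 + k) * ('C(m.+1, k))%:Z * ('C(j, m.+1))%:Z = Sg j k.
  rewrite /Sg [in RHS]big_nat_recl // [in RHS]bin0 bin0; congr (_ + _).
  rewrite [in LHS]big_nat_recr //=.
  have -> : (('C(j, j.+1))%:Z = 0) by rewrite bin_small.
  by rewrite mulr0 addr0.
rewrite H1 IH.
clear HA H1; case: k => [|k].
  rewrite (eq_bigr (fun m => - ((-1) ^+ (m + 0) * ('C(m, 0))%:Z * ('C(j, m))%:Z))); last first.
    by move=> m _; rewrite sgnS !bin0 mulNr mulNr.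
  rewrite sumrN -/(Sg j 0) IH.
  by rewrite addrN.
rewrite (eq_bigr (fun m => - ((-1) ^+ (m + k.+1) * ('C(m, k.+1))%:Z * ('C(j, m))%:Z)
    + ((-1) ^+ (m + k) * ('C(m, k))%:Z * ('C(j, m))%:Z))); last first.
  move=> m _; rewrite sgnS binS PoszD mulrDr mulrDl mulNr mulNr; congr (_ + _).
  by rewrite addnS sgnS opprK.
rewrite big_split /= sumrN -/(Sg j k.+1) -/(Sg j k) !IH.
by rewrite addrA addrN add0r eqSS.
Qed.


Lemma PoszSum T (r : seq T) (F : T -> nat) :
  ((\sum_(x <- r) F x)%N)%:Z = \sum_(x <- r) (F x)%:Z.
Proof. by elim: r => [|x r IH]; rewrite ?big_nil ?big_cons // PoszD IH. Qed.

Lemma trunc_hi (F : nat -> int) a b c : (a <= b)%N -> (b <= c)%N ->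
  (forall m, (b <= m < c)%N -> F m = 0) -> \sum_(a <= m < c) F m = \sum_(a <= m < b) F m.
Proof.
move=> Hab Hbc H; rewrite (big_cat_nat (n:=b)) //= [X in _ + X]big1_seq ?addr0 //.
by move=> m /andP [_]; rewrite mem_index_iota => /H.
Qed.

Lemma trunc_lo (F : nat -> int) a b c : (a <= b)%N -> (b <= c)%N ->
  (forall m, (a <= m < b)%N -> F m = 0) -> \sum_(a <= m < c) F m = \sum_(b <= m < c) F m.
Proof.
move=> Hab Hbc H; rewrite (big_cat_nat (n:=b)) //= [X in X + _]big1_seq ?add0r //.
by move=> m /andP [_]; rewrite mem_index_iota => /H.
Qed.


Lemma Sg_ext j k M : (j < M)%N ->
  \sum_(0 <= m < M) (-1) ^+ (m + k) * ('C(m, k))%:Z * ('C(j, m))%:Z = (j == k)%:Z.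
Proof.
move=> HM; rewrite (@trunc_hi _ 0 j.+1 M) // -/(Sg j k) ?inv_id //.
move=> m /andP [Hm _].
by rewrite (bin_small Hm) mulr0.
Qed.

Lemma O_big s m : (s < m)%N -> O s m = 0%N.
Proof. by move=> H; rewrite /O bin_small //; lia. Qed.

Lemma num_pierced_le s u w : (1 <= s)%N -> (num_pierced s u w < 2 * s)%N.
Proof.
move=> Hs; have := count_size (pierced u w) (iota 1 (2 * s - 2)).
rewrite size_iota /num_pierced; lia.
Qed.

Unset Implicit Arguments.

Theorem lemma3p4 (s k : nat) (hs : (1 <= s)%N) (hk : (k <= s)%N) :
  (E s k)%:Z = \sum_(k <= m < s.+1) (-1) ^+ (m + k) * ('C(m, k))%:Z * (O s m)%:Z.
Proof.
rewrite -(@trunc_lo _ 0 k s.+1) //; last first.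
  by move=> m /andP [_ Hm]; rewrite bin_small // mulr0 mul0r.
  exact: leqW.
rewrite -(@trunc_hi _ 0 s.+1 (2 * s)) //; last 2 first.
- lia.
- by move=> m /andP [Hm _]; rewrite O_big // mulr0.
rewrite E_sum PoszSum.
rewrite (eq_bigr (fun u => \sum_(w <- allw (2 * s)) \sum_(0 <= m < 2 * s)
   (-1) ^+ (m + k) * ('C(m, k))%:Z * (((balanced u && balanced w) * 'C(num_pierced s u w, m))%N)%:Z)); last first.
  move=> u _; rewrite PoszSum; apply: eq_bigr => w _.
  case: (balanced u && balanced w) => /=.
    rewrite -(Sg_ext k (num_pierced_le u w hs)); apply: eq_bigr => m _.
    by rewrite mul1n.
  by rewrite big1 // => m _; rewrite mul0n mulr0.
rewrite (eq_bigr (fun u => \sum_(0 <= m < 2 * s) \sum_(w <- allw (2 * s))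
   (-1) ^+ (m + k) * ('C(m, k))%:Z * (((balanced u && balanced w) * 'C(num_pierced s u w, m))%N)%:Z)); last first.
  by move=> u _; rewrite exchange_big.
rewrite exchange_big /=; apply: eq_bigr => m _.
rewrite -(key m hs) PoszSum mulr_sumr; apply: eq_bigr => u _.
by rewrite PoszSum mulr_sumr.
Qed.
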